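(* For any positive integer $\nu$, there exists a sequence of length $\nu^2+1$ consisting of $\nu$ symbols and having the isolated equality property.
   Context: A finite or infinite sequence $(x_0,x_1,x_2,\ldots)$ is said to have the isolated equality property if for all distinct positions $i\neq j$, whenever $x_i=x_j$ we have $x_{i+1}\neq x_{j+1}$ and $x_{i-1}\neq x_{j-1}$ (for those indices that exist in the sequence); that is, equality at any pair of locations implies inequality at the pair of their immediate successors and at the pair of their immediate predecessors. (This property is satisfied by state sequences of counter-assisted generators $x_i=f(x_{i-1})+i \pmod n$, for positions $i\neq j \pmod n$.) *)

(* Defs.v *)
From mathcomp Require Import all_boot.
Set Implicit Arguments. Unset Strict Implicit. Unset Printing Implicit Defensive.

Definition isolated_equality (T : eqType) (s : seq T) : Prop :=
  forall (x0 : T) (i j : nat), i < size s -> j < size s -> i <> j ->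
    nth x0 s i = nth x0 s j ->
    (i.+1 < size s -> j.+1 < size s -> nth x0 s i.+1 <> nth x0 s j.+1) /\
    (0 < i -> 0 < j -> nth x0 s i.-1 <> nth x0 s j.-1).

(* Main.v *)
Require Import Defs.
From mathcomp Require Import all_boot.
From mathcomp Require Import zify.
Set Implicit Arguments. Unset Strict Implicit. Unset Printing Implicit Defensive.

Fixpoint pairs (T : Type) (x : T) (s : seq T) : seq (T * T) :=
  match s with [::] => [::] | y :: s' => (x, y) :: pairs y s' end.

Lemma size_pairs (T : Type) (x : T) s : size (pairs x s) = size s.
Proof. by elim: s x => //= y s IH x; rewrite IH. Qed.

Lemma nth_pairs (T : Type) (x0 x : T) s i : i < size s ->
  nth (x0, x0) (pairs x s) i = (nth x0 (x :: s) i, nth x0 (x :: s) i.+1).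
Proof.
elim: s x i => //= y s IH x [|i] //= Hi.
by rewrite IH.
Qed.

Lemma pairs_cat (T : Type) (x : T) s t :
  pairs x (s ++ t) = pairs x s ++ pairs (last x s) t.
Proof. by elim: s x => //= y s IH x; rewrite IH. Qed.

Lemma pairs_map (T U : Type) (f : T -> U) x s :
  pairs (f x) (map f s) = map (fun p => (f p.1, f p.2)) (pairs x s).
Proof. by elim: s x => //= y s IH x; rewrite IH. Qed.

Lemma iso_of_pairs (T : eqType) (x : T) s :
  uniq (pairs x s) -> isolated_equality (x :: s).
Proof.
move=> U x0 i j Hi Hj Hij Heq; split.
- move=> Hi1 Hj1 Heq1.
  have Hi' : i < size (pairs x s) by rewrite size_pairs; move: Hi1 => /=.
  have Hj' : j < size (pairs x s) by rewrite size_pairs; move: Hj1 => /=.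
  apply: Hij; apply/eqP; rewrite -(nth_uniq (x0, x0) Hi' Hj' U).
  rewrite !nth_pairs -?size_pairs // ?Heq ?Heq1 //.
- case: i Hi Hij Heq => [|i] // Hi; case: j Hj => [|j] // Hj Hij Heq _ _ /= Heq1.
  have Hi' : i < size (pairs x s) by rewrite size_pairs.
  have Hj' : j < size (pairs x s) by rewrite size_pairs.
  apply: Hij; congr S; apply/eqP; rewrite -(nth_uniq (x0, x0) Hi' Hj' U).
  by rewrite !nth_pairs -?size_pairs // Heq Heq1.
Qed.

Definition flat (n : nat) (l : seq nat) := flatten [seq [:: k; n] | k <- l].

Definition blk (n : nat) : seq nat := n :: n :: (flat n (iota 1 n.-1) ++ [:: 0]).

Fixpoint body (m : nat) : seq nat :=
  match m with 0 => [:: 0] | m'.+1 => body m' ++ blk m'.+1 end.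

Lemma last_flat n l : last n (flat n l) = n.
Proof. by elim: l => //= k l IH. Qed.

Lemma last_body m : last 0 (body m) = 0.
Proof.
case: m => //= m; rewrite last_cat /blk /= last_cat //.
Qed.

Lemma size_flat n l : size (flat n l) = 2 * size l.
Proof. elim: l => //= k l IH; rewrite IH mulnS. by []. Qed.

Lemma size_body m : size (body m) = m.+1 ^ 2.
Proof.
elim: m => //= m IH; rewrite size_cat IH /blk /= size_cat size_flat size_iota /=.
lia.
Qed.

Lemma flat_mem n l k : k \in l ->
  ((n, k) \in pairs n (flat n l)) && ((k, n) \in pairs n (flat n l)).
Proof.
elim: l => //= k' l IH; rewrite inE => /orP [/eqP -> | /IH /andP [H1 H2]].
  by rewrite !inE !eqxx /= orbT.
by rewrite !inE H1 H2 !orbT.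
Qed.

Lemma cover m a b : a <= m -> b <= m -> (a, b) \in pairs 0 (body m).
Proof.
elim: m a b => [|m IH] a b.
  by rewrite !leqn0 => /eqP -> /eqP ->; rewrite inE.
move=> Ha Hb /=; rewrite pairs_cat last_body mem_cat.
have [/andP [Ham Hbm]|Hn] := boolP ((a <= m) && (b <= m)).
  by rewrite IH.
apply/orP; right.
rewrite /blk /= pairs_cat last_flat /= !inE mem_cat.
have Hfl := @flat_mem m.+1 (iota 1 m).
have [->|Ha'] := eqVneq a m.+1.
  have [->|Hb'] := eqVneq b m.+1; first by rewrite !eqxx !orbT.
  clear Hn; case: b Hb Hb' => [|b] Hb Hb'; first by rewrite !inE !eqxx !orbT.
  have /Hfl /andP [H1 _] : b.+1 \in iota 1 m by rewrite mem_iota; lia.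
  by rewrite H1 !orbT.
have [->|Hb'] := eqVneq b m.+1; last by exfalso; move: Ha' Hb' Hn => /eqP ? /eqP ? /negP ?; lia.
clear Hn; case: a Ha Ha' => [|a] Ha Ha'; first by rewrite !eqxx.
have /Hfl /andP [_ H2] : a.+1 \in iota 1 m by rewrite mem_iota; lia.
by rewrite H2 !orbT.
Qed.

Theorem mainTheorem5 (nu : nat) (hnu : 0 < nu) :
  exists s : seq 'I_nu, size s = nu ^ 2 + 1 /\ isolated_equality s.
Proof.
case: nu hnu => [|m] // _.
set A := [seq (a, b) | a <- iota 0 m.+1, b <- iota 0 m.+1].
have UA : uniq A by rewrite allpairs_uniq ?iota_uniq // => [[? ?] [? ?]].
have sub : {subset A <= pairs 0 (body m)}.
  move=> [a b] /allpairsP [[a' b'] /= [Ha Hb [-> ->]]].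
  by apply: cover; move: Ha Hb; rewrite !inE !mem_iota; lia.
have Hsz : size (pairs 0 (body m)) <= size A.
  by rewrite size_pairs size_body size_allpairs size_iota; lia.
have [_ Heqi] := uniq_min_size UA sub Hsz.
have U : uniq (pairs 0 (body m)) := leq_size_uniq UA sub Hsz.
exists (map (@inord m) (0 :: body m)); split.
  by rewrite size_map /= size_body addn1.
apply: iso_of_pairs; rewrite pairs_map map_inj_in_uniq //.
move=> [a b] [c d]; rewrite -!Heqi => /allpairsP [[a' b'] /= [Ha Hb [-> ->]]].
move=> /allpairsP [[c' d'] /= [Hc Hd [-> ->]]] /= [E1 E2].
move: Ha Hb Hc Hd; rewrite !inE !mem_iota => Ha Hb Hc Hd.
have Ea : a' < m.+1 by move: Ha; case: eqP => [->|_] //= /andP [_]; lia.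
have Eb : b' < m.+1 by move: Hb; case: eqP => [->|_] //= /andP [_]; lia.
have Ec : c' < m.+1 by move: Hc; case: eqP => [->|_] //= /andP [_]; lia.
have Ed : d' < m.+1 by move: Hd; case: eqP => [->|_] //= /andP [_]; lia.
have := congr1 (@nat_of_ord _) E1; have := congr1 (@nat_of_ord _) E2; rewrite !inordK // => -> ->.
by [].
Qed.
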